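(* Let $\Sigma$ and $\Gamma$ be finite alphabets, each with at least two letters, and let $a,b \in \Sigma$ be distinct letters. For every integer $n \ge 2$, $\mathrm{E}_{\mathcal{I}}((ab)^n ba) = 1 + \frac{2}{n-1}$.
   Context: For a nonempty word $v$ and integer $p\ge 0$, $v^{p/|v|}$ denotes the prefix of length $p$ of $vvv\cdots$. For a nonempty finite word $u$, $\mathrm{E}(u) = \sup\{ r \in \mathbb{Q} : u = v^r \text{ for some nonempty word } v\}$. $\mathcal{I}$ is the set of injective morphisms $\Sigma^* \to \Gamma^*$, and for $w\in\Sigma^+$, $\mathrm{E}_{\mathcal{I}}(w) = \sup\{\mathrm{E}(h(w)) : h \in \mathcal{I}\}$. *)

(* Defs.v *)
From HB Require Import structures.
From mathcomp Require Import all_boot all_order all_algebra.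
From mathcomp Require Import boolp classical_sets reals.
Set Implicit Arguments. Unset Strict Implicit. Unset Printing Implicit Defensive.
Import Order.TTheory GRing.Theory Num.Theory.
Local Open Scope classical_set_scope.
Local Open Scope ring_scope.

(* v^{p/|v|} : the prefix of length p of v v v ... (p copies suffice when v <> []) *)
Definition fpow (T : Type) (v : seq T) (p : nat) : seq T :=
  take p (flatten (nseq p v)).

Definition is_frac_power (T : Type) (u v : seq T) (r : rat) : Prop :=
  v <> [::] /\ exists p : nat, r = (p%:R / (size v)%:R)%R /\ u = fpow v p.

Definition expo (R : realType) (T : Type) (u : seq T) : R :=
  sup [set x : R | exists v r, is_frac_power u v r /\ x = ratr r].

Definition is_morphism (S G : Type) (h : seq S -> seq G) : Prop :=
  forall u v, h (u ++ v) = h u ++ h v.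

Definition expo_inj (R : realType) (S G : Type) (w : seq S) : R :=
  sup [set x : R | exists h : seq S -> seq G,
         is_morphism h /\ injective h /\ x = expo R (h w)].

(* Main.v *)
Require Import Defs.
From HB Require Import structures.
From mathcomp Require Import all_boot all_order all_algebra.
From mathcomp Require Import boolp classical_sets reals.
Import Order.TTheory GRing.Theory Num.Theory.
Local Open Scope ring_scope.
Local Close Scope ring_scope.
From HB Require Import structures.
From mathcomp Require Import all_boot all_order all_algebra.
From mathcomp Require Import boolp classical_sets reals.
From mathcomp Require Import zify.
From mathcomp Require Import ring lra.
Import Order.TTheory GRing.Theory Num.Theory.
Set Implicit Arguments. Unset Strict Implicit.

Section Words.
Variable T : eqType.
Variable x0 : T.

Definition per (w : seq T) p := forall i, i + p < size w -> nth x0 w i = nth x0 w (i + p).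

Lemma per_mul w p : per w p -> forall k i, i + k * p < size w -> nth x0 w i = nth x0 w (i + k * p).
Proof.
move=> hp; elim=> [|k IH] i hi; first by rewrite mul0n addn0.
rewrite mulSnr addnA in hi *.
rewrite (IH i); last by lia.
by apply: hp.
Qed.

Lemma per_mod w p i j : per w p -> 0 < p -> i < size w -> j < size w -> i %% p = j %% p ->
  nth x0 w i = nth x0 w j.
Proof.
move=> hp p0 hi hj e.
have h1 := per_mul hp (k:=i %/ p) (i:=i %% p).
have h2 := per_mul hp (k:=j %/ p) (i:=j %% p).
rewrite addnC -divn_eq in h1.
rewrite addnC -divn_eq in h2.
by rewrite -h1 // -h2 // -e.
Qed.

Lemma per_FW w p q : 0 < p -> 0 < q -> p + q <= size w -> per w p -> per w q -> per w (gcdn p q).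
Proof.
move: {2}(p + q) (leqnn (p + q)) => m; elim: m p q => [|m IH] p q hm p0 q0 hs hp hq.
  lia.
have key : forall p q, 0 < p -> p < q -> p + q <= size w -> per w p -> per w q -> per w (q - p).
  clear; move=> p q p0 c hs hp hq i hi.
  case: (leqP p i) => ip.
    have e1 : i + (q-p) = (i-p) + q by lia.
    rewrite e1 -(hq (i-p)); last by lia.
    rewrite (hp (i-p)); last by lia.
    by congr nth; lia.
  rewrite (hq i); last by lia.
  rewrite (hp (i + (q-p))); last by lia.
  by congr nth; lia.
case: (ltngtP p q) => c.
- have -> : gcdn p q = gcdn (q - p) p.
    by rewrite -{1}(subnK (ltnW c)) gcdnDr gcdnC.
  apply: IH => //; try lia.
  exact: key.
- have -> : gcdn p q = gcdn (p - q) q.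
    by rewrite -{1}(subnK (ltnW c)) gcdnC gcdnDr gcdnC.
  apply: IH => //; try lia.
  apply: key => //; lia.
- by rewrite c gcdnn.
Qed.

Lemma nth_flatten_nseq m v i : i < m * size v ->
  nth x0 (flatten (nseq m v)) i = nth x0 v (i %% size v).
Proof.
elim: m i => [|m IH] i hi; first by rewrite mul0n in hi.
rewrite /= nth_cat.
case: ltnP => h; first by rewrite modn_small.
rewrite IH; last by rewrite mulSn in hi; lia.
by rewrite -{2}(subnK h) modnDr.
Qed.

Lemma size_flatten_nseq m (v : seq T) : size (flatten (nseq m v)) = m * size v.
Proof. by elim: m => //= m IH; rewrite size_cat IH mulSn. Qed.

Lemma size_fpow (v : seq T) p : v != [::] -> size (fpow v p) = p.
Proof.
move=> hv; rewrite /fpow size_take size_flatten_nseq.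
have : 0 < size v by case: v hv.
move=> h2; case: (ltnP p (p * size v)) => // h.
by apply/eqP; rewrite eqn_leq h /= -{1}(muln1 p) leq_mul2l h2 orbT.
Qed.

Lemma fpow_per u v : v != [::] -> u = fpow v (size u) -> per u (size v).
Proof.
move=> hv e i hi.
have s0 : 0 < size v by case: v hv {e hi}.
have hb : forall j, j < size u -> nth x0 u j = nth x0 v (j %% size v).
  move=> j hj; rewrite e /fpow nth_take // nth_flatten_nseq //.
  by rewrite -{1}(muln1 j); apply: leq_trans (leq_mul hj s0) _ ; rewrite leqnn.
rewrite !hb //; last by lia.
by rewrite modnDr.
Qed.

Lemma per_fpow u p : 0 < p -> p <= size u -> per u p -> u = fpow (take p u) (size u).
Proof.
move=> p0 pu hp.
have hv : take p u != [::] by case: u pu {hp} => //=; case: p p0.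
have st : size (take p u) = p by rewrite size_take; case: ltnP => //; lia.
apply: (@eq_from_nth _ x0); first by rewrite size_fpow.
move=> i hi.
rewrite /fpow nth_take // nth_flatten_nseq; last first.
  rewrite st; apply: leq_trans (_ : size u * 1 <= _); first by rewrite muln1.
  by rewrite leq_mul2l p0 orbT.
rewrite st nth_take; last by rewrite ltn_mod.
apply: (per_mod hp) => //; first by apply: leq_trans (ltn_pmod _ p0) _.
by rewrite modn_mod.
Qed.

Lemma per_cat u v t r : u = v ++ t -> u = t ++ r -> per u (size v).
Proof.
move=> e1 e2 i hi.
have : i < size t by move: hi; rewrite e1 size_cat; lia.
move=> it.
rewrite {2}e1 nth_cat ltnNge leq_addl /= addnK.
by rewrite {1}e2 nth_cat it.
Qed.


Lemma upper_key (x y : seq T) n q : 2 <= n -> 0 < q -> q < (n - 1) * (size x + size y) ->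
  per (flatten (nseq n (x ++ y)) ++ (y ++ x)) q -> x ++ y = y ++ x.
Proof.
move=> n2 q0 qlt hu.
set z := x ++ y. set W := flatten (nseq n z). set u := W ++ (y ++ x).
have sz : size z = size x + size y by rewrite size_cat.
set s := size z.
have s0 : 0 < s by rewrite /s sz; move: qlt; case: (_ + _) => //; rewrite muln0.
have sW : size W = n * s by rewrite size_flatten_nseq.
have hW : forall i, i < n * s -> nth x0 W i = nth x0 z (i %% s).
  by move=> i hi; rewrite nth_flatten_nseq.
have su : size u = n * s + s by rewrite size_cat sW size_cat [size y + _]addnC -sz.
have uW : forall i, i < n * s -> nth x0 u i = nth x0 W i.
  by move=> i hi; rewrite nth_cat sW hi.
have perWs : per W s.
  move=> i hi; rewrite sW in hi.
  by rewrite !hW ?modnDr //; lia.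
have perWq : per W q.
  move=> i hi; rewrite sW in hi.
  by rewrite -!uW //; [apply: hu; rewrite su; lia | lia].
have qs : q + s <= size W.
  rewrite sW; have : q < (n - 1) * s by rewrite /s sz.
  move=> h; apply: leq_trans (_ : (n - 1) * s + s <= _); first by lia.
  by rewrite -mulSnr; rewrite leq_mul2r; apply/orP; right; lia.
have perWg := per_FW q0 s0 qs perWq perWs.
have g0 : 0 < gcdn q s by rewrite gcdn_gt0 q0.
apply: (@eq_from_nth _ x0); first by rewrite size_cat addnC.
move=> j; rewrite size_cat -sz -/s => hj.
have -> : nth x0 (y ++ x) j = nth x0 u (n * s + j).
  by rewrite /u [in RHS]nth_cat sW ltnNge leq_addr /= addKn.
have qns : q < n * s by move: qs; rewrite sW; lia.
rewrite (per_mod hu (j := (n * s + j) %% q)) //; last 3 first.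
- rewrite su; lia.
- rewrite su; apply: leq_trans (ltn_pmod _ q0) _; lia.
- by rewrite modn_mod.
rewrite uW; last by apply: ltn_trans (ltn_pmod _ q0) _.
rewrite (per_mod perWg (j := j)) //; last 3 first.
- by apply: ltn_trans (ltn_pmod _ q0) _; rewrite sW.
- rewrite sW; apply: leq_trans hj _; rewrite -{1}(mul1n s) leq_mul2r; lia.
- rewrite (modn_dvdm _ (dvdn_gcdl q s)).
  have /dvdnP [k ->] : gcdn q s %| n * s by apply: dvdn_mull; apply: dvdn_gcdr.
  by rewrite modnMDl.
rewrite hW; last by apply: leq_trans hj _; rewrite -{1}(mul1n s) leq_mul2r; lia.
by rewrite modn_small.
Qed.

End Words.

Section Reals.
Variable R : realType.
Local Open Scope classical_set_scope.
Local Open Scope ring_scope.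

Lemma le_frac (A B F G : nat) : (0 < B)%N -> (0 < G)%N -> (A * G <= F * B)%N ->
  A%:R / B%:R <= F%:R / G%:R :> R.
Proof.
move=> B0 G0 h.
rewrite ler_pdivrMr ?ltr0n // mulrAC ler_pdivlMr ?ltr0n //.
by rewrite -!natrM ler_nat.
Qed.

Lemma T_eq (N : nat) : (0 < N)%N -> 1 + 2 / N%:R = (N + 2)%:R / N%:R :> R.
Proof.
move=> N0; have hN : N%:R != 0 :> R by rewrite pnatr_eq0 -lt0n.
by rewrite natrD; field.
Qed.

Lemma expo_elem (T : Type) (u v : seq T) : v <> [::] -> u = fpow v (size u) ->
  [set x : R | exists v r, is_frac_power u v r /\ x = ratr r] ((size u)%:R / (size v)%:R).
Proof.
move=> hv e; exists v, ((size u)%:R / (size v)%:R); split; first by split => //; exists (size u).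
rewrite [RHS](fmorph_div (@ratr R)). by rewrite !rmorph_nat.
Qed.

Lemma expo_elems (T : eqType) (u : seq T) x :
  [set x : R | exists v r, is_frac_power u v r /\ x = ratr r] x ->
  exists v : seq T, [/\ v != [::], u = fpow v (size u) & x = (size u)%:R / (size v)%:R].
Proof.
move=> [v [r [[hv [p [-> e]]] ->]]].
have hv' : v != [::] by apply/eqP.
have sp : size u = p by rewrite e size_fpow.
exists v; split => //; first by rewrite sp.
by rewrite [LHS](fmorph_div (@ratr R)) !rmorph_nat sp.
Qed.

Lemma expo_bounded (T : eqType) (u : seq T) :
  has_ubound [set x : R | exists v r, is_frac_power u v r /\ x = ratr r].
Proof.
exists (size u)%:R => x /expo_elems [v [hv _ ->]].
rewrite -[X in _ <= X]divr1.
have s0 : (0 < size v)%N by case: v hv.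
apply: (@le_frac (size u) (size v) (size u) 1) => //.
by rewrite muln1 leq_pmulr.
Qed.

End Reals.

Lemma morph_nil (S G : Type) (h : seq S -> seq G) : is_morphism h -> h [::] = [::].
Proof.
move=> H; have e := H [::] [::].
move: e; case: (h [::]) => // g s /(congr1 size) /=; rewrite size_cat /=; lia.
Qed.

Lemma morph_w (S G : Type) (h : seq S -> seq G) a b n : is_morphism h ->
  h (flatten (nseq n [:: a; b]) ++ [:: b; a]) =
  flatten (nseq n (h [:: a] ++ h [:: b])) ++ (h [:: b] ++ h [:: a]).
Proof.
move=> H; rewrite H -(H [:: b] [:: a]); congr (_ ++ _).
elim: n => [|n IH]; first exact: morph_nil.
change (h ([:: a; b] ++ flatten (nseq n [:: a; b])) =
  (h [:: a] ++ h [:: b]) ++ flatten (nseq n (h [:: a] ++ h [:: b]))).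
by rewrite H IH -(H [:: a] [:: b]).
Qed.

Lemma flatten_nseq_comm (T : Type) m (l : seq T) :
  flatten (nseq m l) ++ l = l ++ flatten (nseq m l).
Proof. by elim: m => //= [|m IH]; rewrite ?cats0 // -catA IH. Qed.

Lemma flatten_nseqS (T : Type) m (l : seq T) :
  flatten (nseq m.+1 l) = l ++ flatten (nseq m l).
Proof. by []. Qed.

Lemma flatten_nseqSr (T : Type) m (l : seq T) :
  flatten (nseq m.+1 l) = flatten (nseq m l) ++ l.
Proof. by rewrite flatten_nseqS flatten_nseq_comm. Qed.

Lemma fpow_self (T : Type) (u : seq T) : u <> [::] -> fpow u (size u) = u.
Proof.
rewrite /fpow; case: u => // g s _.
change (take (size (g::s)) ((g::s) ++ flatten (nseq (size s) (g::s))) = g::s).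
by rewrite take_size_cat.
Qed.

Local Open Scope ring_scope.
Lemma upper (R : realType) (Sigma Gamma : finType) (a b : Sigma) (hab : a != b)
  (n : nat) (hn : (2 <= n)%N) (h : seq Sigma -> seq Gamma) :
  is_morphism h -> injective h ->
  expo R (h (flatten (nseq n [:: a; b]) ++ [:: b; a])) <= 1 + 2 / (n.-1)%:R.
Proof.
move=> H hi.
have hx : h [:: a] <> [::].
  by move=> e; have := hi [:: a] [::]; rewrite e morph_nil // => /(_ erefl).
have hxy : h [:: a] ++ h [:: b] <> h [:: b] ++ h [:: a].
  rewrite -!H => /hi [e _]; by move: hab; rewrite e eqxx.
have [x0 _] : exists x0 : Gamma, True by case: (h [:: a]) hx => // g _ _; exists g.
rewrite morph_w //.
move: (h [:: a]) (h [:: b]) hx hxy => x y hx hxy.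
set u := flatten _ ++ _.
have su : size u = (n * (size x + size y) + (size x + size y))%N.
  by rewrite /u size_cat size_flatten_nseq !size_cat [(size y + _)%N]addnC.
have hu : u <> [::].
  have : (0 < size x)%N by case: (x) hx.
  move=> hx0 e; move: su; rewrite e /=; lia.
have N0 : (0 < n.-1)%N by rewrite -subn1 subn_gt0.
rewrite T_eq //.
apply: ge_sup.
  exists ((size u)%:R / (size u)%:R); apply: expo_elem => //.
  by rewrite fpow_self.
move=> r /expo_elems [v [hv e ->]].
have v0 : (0 < size v)%N by case: v hv {e}.
case: (leqP ((n - 1) * (size x + size y)) (size v)) => hq.
  apply: le_frac => //.
  rewrite su -subn1.
  have := leq_mul (leqnn (n + 1)) hq.
  nia.
exfalso; apply: hxy; apply: (upper_key (x0 := x0) hn v0 hq).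
exact: fpow_per.
Qed.

Section Construct.
Variables (Sigma Gamma : finType) (a b : Sigma) (hab : a != b) (c d : Gamma) (hcd : c != d) (k : nat).

Definition xk : seq Gamma := c :: flatten (nseq k [:: d; c]).
Definition yk : seq Gamma := [:: d; c].
Definition code (z : Sigma) : seq Gamma :=
  if z == a then xk else if z == b then yk
  else d :: d :: (nseq (index z (enum Sigma)) c ++ [:: d]).
Definition hk (u : seq Sigma) : seq Gamma := flatten (map code u).

Fixpoint dec (f : nat) (s : seq Gamma) : seq Sigma :=
  match f with
  | 0 => [::]
  | f'.+1 =>
    match s with
    | [::] => [::]
    | g :: t =>
      if g == c then a :: dec f' (drop (2 * k) t)
      else match t with
           | [::] => [::]
           | g2 :: t2 =>
             if g2 == c then b :: dec f' t2
             else nth a (enum Sigma) (find (pred1 d) t2) ::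
                  dec f' (drop (find (pred1 d) t2).+1 t2)
           end
    end
  end.

Lemma hk_morph : is_morphism hk.
Proof. by move=> u v; rewrite /hk map_cat flatten_cat. Qed.

Lemma dec_hk u f : (size (hk u) <= f)%N -> dec f (hk u) = u.
Proof.
elim: u f => [|z u IH] f; first by case: f.
have hdc : (d == c) = false by apply/negbTE; rewrite eq_sym.
change (hk (z :: u)) with (code z ++ hk u).
rewrite /code; case: eqP => [->|na].
  rewrite /xk /= size_cat => hs.
  case: f hs => // f hs /=; rewrite eqxx.
  rewrite drop_size_cat; last by rewrite size_flatten_nseq mulnC.
  rewrite IH //; move: hs; rewrite size_flatten_nseq; lia.
case: eqP => [->|nb].
  rewrite /yk size_cat /= => hs.
  case: f hs => // f hs /=; rewrite hdc eqxx IH //; lia.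
set i := index z (enum Sigma).
rewrite size_cat /= size_cat size_nseq => hs.
case: f hs => // f hs /=; rewrite hdc.
rewrite -catA find_cat size_nseq has_nseq /= (negbTE hcd) andbF /= eqxx addn0.
rewrite drop_cat size_nseq ltnNge leqnSn /= subSnn /= drop0.
rewrite nth_index ?mem_enum // IH //; lia.
Qed.

Lemma hk_inj : injective hk.
Proof.
move=> u1 u2 e.
have h1 := @dec_hk u1 (size (hk u1)) (leqnn _).
have h2 : dec (size (hk u1)) (hk u2) = u2 by apply: dec_hk; rewrite e.
by rewrite -h1 -h2 e.
Qed.

Lemma hk_a : hk [:: a] = xk.
Proof. by rewrite /hk /= cats0 /code eqxx. Qed.

Lemma hk_b : hk [:: b] = yk.
Proof. by rewrite /hk /= cats0 /code eq_sym (negbTE hab) eqxx. Qed.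

Lemma xy_comm : xk ++ yk = [:: c; d] ++ xk.
Proof. by rewrite /xk /yk /= flatten_nseq_comm. Qed.

End Construct.

Lemma lower (R : realType) (Sigma Gamma : finType) (a b : Sigma) (hab : a != b)
  (c d : Gamma) (hcd : c != d) (k N : nat) :
  ((N.+3 * (2 * k + 3))%:R / (N.+1 * (2 * k + 3) + 2)%:R : R) <=
  expo R (hk a b c d k (flatten (nseq N.+2 [:: a; b]) ++ [:: b; a])).
Proof.
rewrite morph_w; last exact: hk_morph.
rewrite hk_a hk_b //.
have sx : size (xk c d k) = (2 * k + 1)%N by rewrite /= size_flatten_nseq /=; lia.
have sz : size (xk c d k ++ yk c d) = (2 * k + 3)%N by rewrite size_cat sx /=; lia.
move: (xy_comm c d k) sx sz; move: (xk c d k) (yk c d) => x y xy sx sz.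
set s := (2 * k + 3)%N in sz *.
have [z ez] : {z | z = x ++ y} by exists (x ++ y).
rewrite -ez in xy sz *.
set u := flatten _ ++ _.
have su : size u = (N.+3 * s)%N.
  rewrite /u size_cat size_flatten_nseq sz size_cat [(size y + _)%N]addnC -size_cat -ez sz.
  by rewrite -mulSnr.
set v := flatten (nseq N.+1 z) ++ [:: c; d].
have sv : size v = (N.+1 * s + 2)%N by rewrite size_cat size_flatten_nseq sz.
have e1 : u = v ++ (z ++ x).
  rewrite /u /v (flatten_nseqSr N.+1 z); move: (flatten (nseq N.+1 z)) => F.
  rewrite -!catA; congr (_ ++ _).
  rewrite {1}xy -catA ez; congr (_ ++ _); exact: catA.
have e2 : u = (z ++ x) ++ (y ++ flatten (nseq N z) ++ y ++ x).
  rewrite /u (flatten_nseqS N.+1 z) (flatten_nseqS N z); move: (flatten (nseq N z)) => F.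
  rewrite -!catA; congr (_ ++ _).
  by rewrite {1}ez -catA.
have hp := per_cat c e1 e2.
have v0 : (0 < size v)%N by rewrite sv addn2.
have vu : (size v <= size u)%N by rewrite sv su; lia.
have hf := per_fpow v0 vu hp.
have st : size (take (size v) u) = size v.
  by rewrite size_take; case: ltnP => //; lia.
have Hv : take (size v) u <> [::] by move=> e; move: st; rewrite e sv addn2.
have Hel := @expo_elem R Gamma u (take (size v) u) Hv hf.
rewrite st su sv in Hel.
exact: (ub_le_sup (expo_bounded R u)).
Qed.

Lemma real_tail (R : realType) (N k s : nat) :
  s = (2 * (N.+3 * k.+1) + 3)%N ->
  1 + 2 / (N.+1)%:R <= ((N.+3 * s)%:R / (N.+1 * s + 2)%:R : R) + (k.+1)%:R^-1.
Proof.
move=> es.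
rewrite T_eq //.
have B0 : (N.+1 * s + 2)%:R != 0 :> R by rewrite pnatr_eq0 addn2.
have C0 : (k.+1)%:R != 0 :> R by rewrite pnatr_eq0.
have -> : ((N.+3 * s)%:R / (N.+1 * s + 2)%:R : R) + (k.+1)%:R^-1 =
   ((N.+3 * s * k.+1 + (N.+1 * s + 2))%:R / ((N.+1 * s + 2) * k.+1)%:R).
  rewrite natrD !natrM; field.
  have k0 : 0 <= k%:R :> R := ler0n _ _.
  have N0 : 0 <= N%:R :> R := ler0n _ _.
  have s0 : 0 <= s%:R :> R := ler0n _ _.
  have := mulr_ge0 (addr_ge0 (@ler01 R) N0) s0.
  move=> hm; apply/andP; split; rewrite gt_eqF //; lra.
apply: le_frac => //; first by rewrite muln_gt0 addn2.
have hs : (2 * (N.+3 * k.+1) <= s)%N by rewrite es; lia.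
have h2 : (s <= (N.+1 * s + 2) * N.+1)%N by nia.
nia.
Qed.

Lemma two_elems (Gamma : finType) : (2 <= #|Gamma|)%N -> exists c d : Gamma, c != d.
Proof.
rewrite cardE => h.
have := enum_uniq Gamma.
case: (enum Gamma) h => [|c [|d s]] //= _.
rewrite inE negb_or => /andP [/andP [hcd _] _].
by exists c, d.
Qed.

Theorem theorem8 (R : realType) (Sigma Gamma : finType)
  (hS : (2 <= #|Sigma|)%N) (hG : (2 <= #|Gamma|)%N)
  (a b : Sigma) (hab : a != b) (n : nat) (hn : (2 <= n)%N) :
  expo_inj R Gamma (flatten (nseq n [:: a; b]) ++ [:: b; a])
  = 1 + 2 / (n.-1)%:R.
Proof.
have [c [d hcd]] := two_elems hG.
have hub : ubound [set x : R | exists h : seq Sigma -> seq Gamma,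
         is_morphism h /\ injective h /\ x = expo R (h (flatten (nseq n [:: a; b]) ++ [:: b; a]))]
         (1 + 2 / (n.-1)%:R).
  by move=> r [h [hm [hi ->]]]; apply: upper.
apply/eqP; rewrite eq_le; apply/andP; split.
  apply: ge_sup => //.
  exists (expo R (hk a b c d 0 (flatten (nseq n [:: a; b]) ++ [:: b; a]))).
  exists (hk a b c d 0); split; first exact: hk_morph.
  by split; first exact: hk_inj.
rewrite leNgt; apply/negP => hlt.
have [k hk'] := ltr_add_invr hlt.
case: n hn hub hlt hk' => [|[|N]] // _ hub hlt hk'.
have L := lower R hab hcd (N.+3 * k.+1) N.
have E : expo R (hk a b c d (N.+3 * k.+1) (flatten (nseq N.+2 [:: a; b]) ++ [:: b; a]))
   <= expo_inj R Gamma (flatten (nseq N.+2 [:: a; b]) ++ [:: b; a]).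
  apply: (ub_le_sup (E := [set x : R | exists h : seq Sigma -> seq Gamma,
         is_morphism h /\ injective h /\ x = expo R (h (flatten (nseq N.+2 [:: a; b]) ++ [:: b; a]))])).
    by exists (1 + 2 / (N.+2).-1%:R).
  exists (hk a b c d (N.+3 * k.+1)); split; first exact: hk_morph.
  by split; first exact: hk_inj.
have := real_tail R (erefl (2 * (N.+3 * k.+1) + 3)%N).
move=> H.
have H2 := le_trans L E.
have H3 : (N.+3 * (2 * (N.+3 * k.+1) + 3))%:R /
  (N.+1 * (2 * (N.+3 * k.+1) + 3) + 2)%:R + k.+1%:R^-1 <=
  expo_inj R Gamma (flatten (nseq N.+2 [:: a; b]) ++ [:: b; a]) + k.+1%:R^-1.
  by rewrite lerD2r.
have := lt_le_trans hk' (le_trans H H3).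
by rewrite ltxx.
Qed.
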